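(* Under the hypotheses of Theorem 1 (regular spherically symmetric asymptotically flat Einstein–Maxwell data, electrovacuum outside the ball $\mathcal{B}=\{l\le l_0\}$ of area radius $\mathcal{R}$, dominant energy condition in $\mathcal{B}$, total charge $Q\ne0$, ADM mass $M$), suppose $M\ge |Q|$ and the exterior region $\{l\ge l_0\}$ is untrapped. Then $\mathcal{R}> r_+:=M+\sqrt{M^2-Q^2}\ge |Q|$; in particular $\mathcal{R}>|Q|$. If instead $M\ge|Q|$ and the exterior region is not untrapped, the horizon is the sphere at the largest $l_1\ge l_0$ with $r(l_1)=r_+$, and its area radius is $\mathcal{R}_0=r_+$.
   Context: Metric $dl^2+r(l)^2(d\theta^2+\sin^2\theta d\phi^2)$ on $\mathbb{R}^3$, $r(0)=0$, $r'(0)=1$; $K_{ij}=n_in_jK_l+(h_{ij}-n_in_j)K_r$. Null expansions $\theta^\pm=\frac2r(r'\pm K_rr)$; a region is untrapped if $\theta^+\theta^->0$ there, trapped if $\theta^+\theta^-<0$; a horizon is the outer boundary of a trapped region ($\theta^+\theta^-=0$ there). Asymptotic flatness gives $r(l)\to\infty$ as $l\to\infty$. Electrovacuum: no non-electromagnetic matter, no momentum density, no charge density; no magnetic field. Charge $Q=E(l_0)r(l_0)^2$ where $E$ is the radial electric field. *)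

(* Defs.v *)
From Stdlib Require Import Reals Lra.
Open Scope R_scope.

(* Spherically symmetric initial data on R^3:
   metric dl^2 + r(l)^2 dOmega^2,  K = n n K_l + (h - n n) K_r,
   radial electric field E, no magnetic field.  Units G = c = 1 (Gaussian).
   dr, ddr are the first and second derivatives of r, dKr of Kr, dE of E. *)

Definition scal (r dr ddr : R -> R) (l : R) : R :=
  2 / (r l)^2 * (1 - (dr l)^2 - 2 * r l * ddr l).

(* Non-electromagnetic energy density from the Hamiltonian constraint:
   16 pi mu = R + (tr K)^2 - |K|^2 - 2 (E^2 + B^2),  B = 0,
   with tr K = Kl + 2 Kr, |K|^2 = Kl^2 + 2 Kr^2. *)
Definition mu (r dr ddr Kl Kr E : R -> R) (l : R) : R :=
  (scal r dr ddr l + (Kl l + 2 * Kr l)^2 - ((Kl l)^2 + 2 * (Kr l)^2)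
     - 2 * (E l)^2) / (16 * PI).

(* Radial component of the non-electromagnetic momentum density from the
   momentum constraint  D^j (K_ij - tr K h_ij) = 8 pi J_i  (Poynting vector
   vanishes since B = 0). *)
Definition Jmom (r dr Kl Kr dKr : R -> R) (l : R) : R :=
  (2 * dr l / r l * (Kl l - Kr l) - 2 * dKr l) / (8 * PI).

(* Charge density from Gauss's law div E = 4 pi rho_e. *)
Definition rho_e (r dr E dE : R -> R) (l : R) : R :=
  (2 * r l * dr l * E l + (r l)^2 * dE l) / (4 * PI * (r l)^2).

Definition theta_plus (r dr Kr : R -> R) (l : R) : R :=
  2 / r l * (dr l + Kr l * r l).
Definition theta_minus (r dr Kr : R -> R) (l : R) : R :=
  2 / r l * (dr l - Kr l * r l).
Definition theta_prod (r dr Kr : R -> R) (l : R) : R :=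
  theta_plus r dr Kr l * theta_minus r dr Kr l.

Definition untrapped_exterior (r dr Kr : R -> R) (l0 : R) : Prop :=
  forall l, l0 <= l -> 0 < theta_prod r dr Kr l.

(* A horizon (outer boundary of the (possibly marginally) trapped region):
   theta+ theta- = 0 at the sphere l1, and everything outside is untrapped. *)
Definition is_horizon (r dr Kr : R -> R) (l1 : R) : Prop :=
  theta_prod r dr Kr l1 = 0 /\
  (forall l, l1 < l -> 0 < theta_prod r dr Kr l).

Definition hawking_mass (r dr Kr : R -> R) (l : R) : R :=
  r l / 2 * (1 - (dr l)^2 + (Kr l)^2 * (r l)^2).

(* ADM mass of spherically symmetric asymptotically flat data:
   the limit of the Hawking mass at infinity. *)
Definition is_ADM_mass (r dr Kr : R -> R) (M : R) : Prop :=
  forall eps, 0 < eps -> exists L, forall l, L <= l ->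
    Rabs (hawking_mass r dr Kr l - M) < eps.

Definition charge (r E : R -> R) (l0 : R) : R := E l0 * (r l0)^2.

Definition r_plus (M Q : R) : R := M + sqrt (M^2 - Q^2).

(* Main.v *)
Require Import Defs.
From Stdlib Require Import Reals Lra.
Open Scope R_scope.

Lemma dmul f g x a b : derivable_pt_lim f x a -> derivable_pt_lim g x b ->
  derivable_pt_lim (fun y => f y * g y) x (a * g x + f x * b).
Proof. intros; apply (derivable_pt_lim_mult f g); auto. Qed.
Lemma dplus f g x a b : derivable_pt_lim f x a -> derivable_pt_lim g x b ->
  derivable_pt_lim (fun y => f y + g y) x (a + b).
Proof. intros; apply (derivable_pt_lim_plus f g); auto. Qed.
Lemma dminus f g x a b : derivable_pt_lim f x a -> derivable_pt_lim g x b ->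
  derivable_pt_lim (fun y => f y - g y) x (a - b).
Proof. intros; apply (derivable_pt_lim_minus f g); auto. Qed.
Lemma dconst c x : derivable_pt_lim (fun _ => c) x 0.
Proof. apply (derivable_pt_lim_const c). Qed.
Lemma ddivc c g x b : derivable_pt_lim g x b -> g x <> 0 ->
  derivable_pt_lim (fun y => c / g y) x ((0 * g x - b * c) / (g x)²).
Proof. intros; apply (derivable_pt_lim_div (fun _ => c) g); auto. apply dconst. Qed.
Lemma deq f x a b : derivable_pt_lim f x a -> a = b -> derivable_pt_lim f x b.
Proof. intros; subst; auto. Qed.

Lemma const_after f f' a : (forall c, derivable_pt_lim f c (f' c)) ->
  (forall c, a < c -> f' c = 0) -> forall b, a <= b -> f b = f a.
Proof.
  intros Hd H0 b Hb. destruct (Req_dec a b) as [->|Hne]; auto.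
  destruct (MVT_cor2 f f' a b) as [c [Hc1 Hc2]]; [lra|intros; auto|].
  rewrite H0 in Hc1; lra.
Qed.

Lemma const_after2 f f' a : (forall c, a <= c -> derivable_pt_lim f c (f' c)) ->
  (forall c, a < c -> f' c = 0) -> forall b, a <= b -> f b = f a.
Proof.
  intros Hd H0 b Hb. destruct (Req_dec a b) as [->|Hne]; auto.
  destruct (MVT_cor2 f f' a b) as [c [Hc1 Hc2]]; [lra|intros; apply Hd; lra|].
  rewrite H0 in Hc1; lra.
Qed.

Section S.
Variables (r dr ddr Kl Kr dKr E dE : R -> R) (l0 : R).
Hypothesis (Hr : forall l, derivable_pt_lim r l (dr l))
  (Hdr : forall l, derivable_pt_lim dr l (ddr l))
  (HKr : forall l, derivable_pt_lim Kr l (dKr l))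
  (HE : forall l, derivable_pt_lim E l (dE l))
  (Hrpos : forall l, 0 < l -> 0 < r l) (Hl0 : 0 < l0)
  (Hvac : forall l, l0 < l ->
     mu r dr ddr Kl Kr E l = 0 /\ Jmom r dr Kl Kr dKr l = 0 /\
     rho_e r dr E dE l = 0).

Lemma charge_const : forall l, l0 <= l -> E l * (r l)^2 = charge r E l0.
Proof.
  intros l Hl. unfold charge.
  apply (const_after (fun y => E y * (r y * (r y * 1)))
     (fun y => dE y * (r y * (r y * 1)) + E y * (dr y * (r y * 1) + r y * (dr y * 1 + r y * 0)))); auto.
  - intro c. eapply deq. repeat (first [eapply dmul | eapply dconst | apply Hr | apply HE]). reflexivity.
  - intros c Hc. destruct (Hvac c Hc) as [_ [_ H]]. unfold rho_e in H.
    assert (0 < r c) by (apply Hrpos; lra).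
    assert (PI > 0) by apply PI_RGT_0.
    apply Rmult_integral in H. destruct H as [H|H].
    + nra.
    + exfalso. assert (4 * PI * r c ^ 2 > 0) by (apply Rmult_lt_0_compat; try nra).
      apply Rinv_neq_0_compat in H; [|lra]. auto. 
Qed.

Definition hh Q y := 1/2 * (r y * (1 - dr y * dr y + Kr y * Kr y * (r y * r y))) + (Q*Q/2) / r y.
Definition Dh Q c := 1/2*(dr c*(1 - dr c*dr c + Kr c*Kr c*(r c*r c)) + r c*(-(2 * ddr c * dr c) + 2 * Kr c * dKr c * (r c * r c) + Kr c * Kr c * 2 * r c * dr c)) - dr c * (Q*Q/2) / (r c * r c).

Lemma dhh Q c : r c <> 0 -> derivable_pt_lim (hh Q) c (Dh Q c).
Proof.
  intros. unfold hh. eapply deq.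
  repeat (first [eapply dminus | eapply ddivc | eapply dplus | eapply dmul | eapply dconst | apply Hr | apply Hdr | apply HKr]).
  lra. auto. unfold Dh, Rsqr. simpl. field. auto.
Qed.

Lemma hh_const : forall l, l0 <= l -> hh (charge r E l0) l = hh (charge r E l0) l0.
Proof.
  apply (const_after2 _ (Dh (charge r E l0))).
  - intros c Hc. apply dhh. assert (0 < r c) by (apply Hrpos; lra). lra.
  - intros c Hc. destruct (Hvac c Hc) as [Hmu [HJ _]].
    assert (Hq := charge_const c (Rlt_le _ _ Hc)).
    assert (0 < r c) by (apply Hrpos; lra).
    assert (PI > 0) by apply PI_RGT_0.
    unfold mu, scal in Hmu. unfold Jmom in HJ.
    assert (Hmu' : 2 * (1 - dr c ^ 2 - 2 * r c * ddr c) + r c ^ 2 * (4 * Kl c * Kr c + 2 * Kr c ^2 - 2 * E c ^ 2) = 0).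
    { apply (Rmult_eq_reg_r (/(16*PI) * / (r c)^2)). 2: { apply Rmult_integral_contrapositive; split; apply Rinv_neq_0_compat; nra. }
      rewrite Rmult_0_l. rewrite <- Hmu. field. split; nra. }
    assert (HJ' : dr c * (Kl c - Kr c) - r c * dKr c = 0).
    { apply (Rmult_eq_reg_r (/(4*PI) * / (r c))). 2: { apply Rmult_integral_contrapositive; split; apply Rinv_neq_0_compat; nra. }
      rewrite Rmult_0_l. rewrite <- HJ. field. split; nra. }
    rewrite <- Hq. unfold Dh.
    assert (EK: dKr c = dr c * (Kl c - Kr c) / r c). { apply (Rmult_eq_reg_r (r c)); [|lra]. field_simplify; [|lra]. lra. }
    assert (ED: ddr c = (2 * (1 - dr c ^ 2) + r c ^ 2 * (4 * Kl c * Kr c + 2 * Kr c ^2 - 2 * E c ^ 2)) / (4 * r c)). { apply (Rmult_eq_reg_r (4 * r c)); [|lra]. field_simplify; [|lra]. lra. }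
    rewrite EK, ED. field. lra.
Qed.

Hypothesis (HAF : forall B, exists L, forall l, L <= l -> B < r l).

Lemma hh_M M : is_ADM_mass r dr Kr M -> forall l, l0 <= l -> hh (charge r E l0) l = M.
Proof.
  intros HM l Hl. rewrite (hh_const l Hl). set (Q := charge r E l0).
  destruct (Req_dec (hh Q l0) M) as [e|ne]; auto. exfalso.
  set (eps := Rabs (hh Q l0 - M) / 2).
  assert (Heps : 0 < eps) by (unfold eps; assert (Rabs (hh Q l0 - M) > 0) by (apply Rabs_pos_lt; lra); lra).
  destruct (HM eps Heps) as [L1 H1]. destruct (HAF (Q*Q/eps)) as [L2 H2].
  set (x := Rmax (Rmax L1 L2) l0).
  assert (x1 : L1 <= x) by (unfold x; apply Rle_trans with (Rmax L1 L2); apply Rmax_l || apply Rmax_r).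
  assert (x2 : L2 <= x) by (unfold x; apply Rle_trans with (Rmax L1 L2); [apply Rmax_r | apply Rmax_l]).
  assert (x3 : l0 <= x) by (unfold x; apply Rmax_r).
  specialize (H1 x x1). specialize (H2 x x2).
  assert (rx : 0 < r x) by (apply Hrpos; lra).
  assert (Hh := hh_const x x3). fold Q in Hh.
  assert (Hm : hawking_mass r dr Kr x = hh Q x - Q*Q/(2 * r x)) by (unfold hawking_mass, hh; field; lra).
  rewrite Hm, Hh in H1.
  assert (Hb : Q*Q/(2*r x) < eps/2).
  { apply (Rmult_lt_reg_r (2 * r x)); [lra|]. unfold Rdiv. field_simplify; [|lra].
    apply (Rmult_lt_compat_r eps) in H2; auto. unfold Rdiv in H2. rewrite Rmult_assoc, Rinv_l in H2; lra. }
  assert (Q*Q/(2*r x) >= 0). { unfold Rdiv. apply Rle_ge, Rmult_le_pos; [nra|]. left; apply Rinv_0_lt_compat; lra. }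
  revert H1. unfold eps in *. 
  destruct (Rcase_abs (hh Q l0 - M)) as [a|a];
  [rewrite (Rabs_left _ a) in *| rewrite (Rabs_right _ a) in *];
  intro H1; [rewrite Rabs_left1 in H1 | rewrite Rabs_right in H1]; lra.
Qed.

Lemma theta_formula M : is_ADM_mass r dr Kr M -> forall l, l0 <= l ->
  theta_prod r dr Kr l * (r l)^4 = 4 * ((r l)^2 - 2 * M * r l + (charge r E l0)^2).
Proof.
  intros HM l Hl. assert (H := hh_M M HM l Hl). assert (0 < r l) by (apply Hrpos; lra).
  unfold hh in H. unfold theta_prod, theta_plus, theta_minus.
  rewrite <- H. field. lra.
Qed.
End S.

Lemma ivt_r (r : R -> R) (Hc : continuity r) a b v : a <= b -> r a <= v <= r b ->
  exists z, a <= z <= b /\ r z = v.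
Proof.
  intros Hab Hv.
  destruct (IVT_cor (fun x => r x - v) a b) as [z [Hz1 Hz2]]; auto.
  - change (continuity (r - fct_cte v)%F). apply continuity_minus; auto. apply continuity_const. intros x y; reflexivity.
  - nra.
  - exists z; split; auto; lra.
Qed.

Theorem mainTheorem5
  (r dr ddr Kl Kr dKr E dE : R -> R) (l0 M : R)
  (Hr : forall l, derivable_pt_lim r l (dr l))
  (Hdr : forall l, derivable_pt_lim dr l (ddr l))
  (HKr : forall l, derivable_pt_lim Kr l (dKr l))
  (HKl : forall l, continuity_pt Kl l)
  (HE : forall l, derivable_pt_lim E l (dE l))
  (Hr0 : r 0 = 0) (Hdr0 : dr 0 = 1)
  (Hrpos : forall l, 0 < l -> 0 < r l)
  (Hl0 : 0 < l0)
  (HAF : forall B, exists L, forall l, L <= l -> B < r l)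
  (HM : is_ADM_mass r dr Kr M)
  (Hvac : forall l, l0 < l ->
     mu r dr ddr Kl Kr E l = 0 /\ Jmom r dr Kl Kr dKr l = 0 /\
     rho_e r dr E dE l = 0)
  (HDEC : forall l, 0 < l <= l0 ->
     Rabs (Jmom r dr Kl Kr dKr l) <= mu r dr ddr Kl Kr E l)
  (HQ : charge r E l0 <> 0)
  (HMQ : Rabs (charge r E l0) <= M) :
  (untrapped_exterior r dr Kr l0 ->
     r_plus M (charge r E l0) < r l0 /\
     Rabs (charge r E l0) <= r_plus M (charge r E l0) /\
     Rabs (charge r E l0) < r l0)
  /\
  (~ untrapped_exterior r dr Kr l0 ->
     exists l1, l0 <= l1 /\ r l1 = r_plus M (charge r E l0) /\
       (forall l, l0 <= l -> r l = r_plus M (charge r E l0) -> l <= l1) /\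
       is_horizon r dr Kr l1).
Proof.
  set (Q := charge r E l0) in *.
  set (s := sqrt (M^2 - Q^2)).
  assert (HQ2 : Q^2 <= M^2).
  { assert (Q^2 = Rabs Q ^2) by (rewrite <- Rsqr_pow2, <- Rsqr_pow2, Rsqr_abs; auto).
    assert (0 <= Rabs Q) by apply Rabs_pos. nra. }
  assert (Hs0 : 0 <= s) by apply sqrt_pos.
  assert (Hss : s * s = M^2 - Q^2) by (apply sqrt_sqrt; lra).
  assert (Hrp : r_plus M Q = M + s) by reflexivity.
  rewrite Hrp. set (rp := M + s). set (rm := M - s).
  assert (TF : forall l, l0 <= l -> theta_prod r dr Kr l * (r l)^4 = 4 * ((r l - rp) * (r l - rm))).
  { intros l Hl. rewrite (theta_formula r dr ddr Kl Kr dKr E dE l0 Hr Hdr HKr HE Hrpos Hl0 Hvac HAF M HM l Hl).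
    fold Q. unfold rp, rm. nra. }
  assert (Hr4 : forall l, l0 <= l -> 0 < (r l)^4) by (intros l Hl; assert (0 < r l) by (apply Hrpos; lra); apply pow_lt; lra).
  assert (Hcont : continuity r) by (intro x; apply (derivable_continuous_pt r x (exist _ (dr x) (Hr x)))).
  assert (Far : forall v a, exists b, a <= b /\ forall x, b <= x -> v < r x).
  { intros v a. destruct (HAF v) as [L HL]. exists (Rmax a L). split. apply Rmax_l.
    intros x Hx. apply HL. apply Rle_trans with (Rmax a L); auto. apply Rmax_r. }
  assert (HQr : Rabs Q <= rp) by (unfold rp; lra).
  assert (Above : forall l, l0 <= l -> rp < r l -> 0 < theta_prod r dr Kr l).
  { intros l Hl H. assert (H4 := Hr4 l Hl). assert (T := TF l Hl).
    assert (0 < (r l - rp) * (r l - rm)) by (apply Rmult_lt_0_compat; unfold rm, rp in *; lra).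
    nra. }
  assert (Cross : forall l, l0 <= l -> r l <= rp -> exists z, l <= z /\ r z = rp).
  { intros l Hl H. destruct (Far rp l) as [b [Hb1 Hb2]].
    destruct (ivt_r r Hcont l b rp Hb1) as [z [Hz1 Hz2]]. split; auto. left; apply Hb2; lra.
    exists z; split; [lra|auto]. }
  split.
  - intros Hun. assert (rp < r l0).
    { destruct (Rlt_or_le rp (r l0)) as [h|h]; auto. exfalso.
      destruct (Cross l0 (Rle_refl _) h) as [z [Hz1 Hz2]].
      assert (T := TF z Hz1). assert (U := Hun z Hz1). assert (H4 := Hr4 z Hz1).
      rewrite Hz2 in T. assert (theta_prod r dr Kr z = 0) by nra. lra. }
    split; [auto | split; lra].
  - intros Hnot.
    assert (Ex : exists l, l0 <= l /\ r l <= rp).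
    { apply Classical_Prop.NNPP. intro Hc. apply Hnot. intros l Hl.
      apply Above; auto. destruct (Rlt_or_le rp (r l)) as [h|h]; auto. exfalso; apply Hc; eauto. }
    destruct Ex as [la [Hla1 Hla2]]. destruct (Cross la Hla1 Hla2) as [x0 [Hx01 Hx02]].
    set (S := fun x => l0 <= x /\ r x = rp).
    destruct (Far rp l0) as [b [Hb1 Hb2]].
    assert (Sb : bound S). { exists b. intros x [Hx1 Hx2]. destruct (Rle_or_lt x b) as [h|h]; auto. specialize (Hb2 x (Rlt_le _ _ h)). lra. }
    destruct (completeness S Sb) as [l1 [Hub Hlub]]. { exists x0. split; auto; lra. }
    assert (Hx0l1 : x0 <= l1) by (apply Hub; split; auto; lra).
    assert (Hl1r : r l1 = rp).
    { apply Classical_Prop.NNPP. intro hne.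
      set (e := Rabs (r l1 - rp)).
      assert (he : e > 0) by (apply Rabs_pos_lt; lra).
      assert (Hc := Hcont l1). unfold continuity_pt, continue_in, limit1_in, limit_in in Hc.
      destruct (Hc e he) as [d [Hd Hdd]]. simpl in Hdd. unfold R_dist in Hdd.
      assert (Hnb : ~ is_upper_bound S (l1 - d)).
      { intro h. specialize (Hlub _ h). lra. }
      apply Hnb. intros x [Hx1 Hx2]. destruct (Rle_or_lt x (l1 - d)) as [h|h]; auto. exfalso.
      assert (x <= l1) by (apply Hub; split; auto).
      destruct (Req_dec x l1) as [->|hx]. lra.
      assert (Hd2 := Hdd x). rewrite Hx2 in Hd2. unfold e in Hd2.
      assert (Rabs (rp - r l1) = Rabs (r l1 - rp)) by apply Rabs_minus_sym.
      assert (Rabs (x - l1) < d) by (rewrite Rabs_left1; lra).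
      unfold D_x, no_cond in Hd2. specialize (Hd2 (conj (conj I (not_eq_sym hx)) H1)). lra. }
    exists l1. split; [lra|]. split; auto. split.
    + intros l Hl Hrl. apply Hub. split; auto.
    + split.
      * assert (T := TF l1 ltac:(lra)). assert (H4 := Hr4 l1 ltac:(lra)). rewrite Hl1r in T. nra.
      * intros l Hl. apply Above; [lra|].
        destruct (Rlt_or_le rp (r l)) as [h|h]; auto. exfalso.
        destruct (Cross l ltac:(lra) h) as [z [Hz1 Hz2]].
        assert (z <= l1) by (apply Hub; split; auto; lra). lra.
Qed.
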